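(* Let $G$ be a directed graph with vertices $s,t$, let $k\ge1$, and let $C\in U^k$ satisfy $d_{\mathrm{sum}}(C)=\max_{S\in U^k}d_{\mathrm{sum}}(S)$. Then there exists $C'\in U^k_{\mathrm{lr}}$ such that $d_{\mathrm{sum}}(C')=d_{\mathrm{sum}}(C)$.
   Context: An $s$-$t$ cut of a directed graph $G$ is a set $X\subseteq E(G)$ such that removing $X$ leaves no directed $s$-$t$ path; $\Gamma_G(s,t)$ is the set of $s$-$t$ cuts of minimum cardinality. For $s$-$t$ cuts $X,Y$, write $X\le Y$ if every directed $s$-$t$ path in $G$ meets an edge of $X$ at or before an edge of $Y$. $U^k$ is the set of $k$-tuples $[X_1,\dots,X_k]$ of elements of $\Gamma_G(s,t)$ and $U^k_{\mathrm{lr}}$ the subset of those with $X_i\le X_j$ for all $i<j$. $d_{\mathrm{sum}}(X_1,\dots,X_k)=\sum_{1\le i<j\le k}|X_i\triangle X_j|$ with $\triangle$ the symmetric difference. *)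

(* Defs.v *)
From mathcomp Require Import all_boot.
Set Implicit Arguments. Unset Strict Implicit. Unset Printing Implicit Defensive.

Section Cuts.
Variables (V : finType) (E : rel V) (s t : V).

Definition edgeset : {set V * V} := [set x | E x.1 x.2].

Definition st_path (p : seq V) : bool :=
  [&& path E s p, last s p == t & uniq (s :: p)].

Definition pedges (p : seq V) : seq (V * V) := pairmap (fun a b => (a, b)) s p.

Definition is_cut (X : {set V * V}) : Prop :=
  X \subset edgeset /\ forall p, st_path p -> has (mem X) (pedges p).

Definition is_min_cut (X : {set V * V}) : Prop :=
  is_cut X /\ forall Y, is_cut Y -> #|X| <= #|Y|.

Definition cut_le (X Y : {set V * V}) : Prop :=
  forall p, st_path p -> find (mem X) (pedges p) <= find (mem Y) (pedges p).

Definition symdiff (A B : {set V * V}) : {set V * V} := (A :\: B) :|: (B :\: A).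

Definition inU (k : nat) (C : 'I_k -> {set V * V}) : Prop :=
  forall i, is_min_cut (C i).

Definition inUlr (k : nat) (C : 'I_k -> {set V * V}) : Prop :=
  inU C /\ forall i j : 'I_k, i < j -> cut_le (C i) (C j).

Definition dsum (k : nat) (C : 'I_k -> {set V * V}) : nat :=
  \sum_(i < k) \sum_(j < k | i < j) #|symdiff (C i) (C j)|.

End Cuts.

(* Main.v *)
Require Import Defs.
From mathcomp Require Import all_boot zify.
Set Implicit Arguments. Unset Strict Implicit. Unset Printing Implicit Defensive.

Lemma pos_eq_sum (I : finType) (f g : I -> nat) :
  (forall x, f x <= g x) -> \sum_x g x <= \sum_x f x -> forall x, f x = g x.
Proof.
move=> le1 le2.
have h : \sum_x (g x - f x) == 0.
  by rewrite sumnB ?subn_eq0.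
move: h; rewrite sum_nat_eq0 => /forallP h x.
have := h x; rewrite /= subn_eq0 => h2; apply/eqP; by rewrite eqn_leq le1 h2.
Qed.

Lemma card_sum_nat (T : finType) (A : {set T}) : #|A| = \sum_x (x \in A : nat).
Proof. by rewrite -sum1_card big_mkcond; apply: eq_bigr => x _; case: (x \in A). Qed.

Lemma card_interval k a b (P : {set 'I_k}) :
  (forall i, i \in P -> a <= i < b) -> #|P| <= b - a.
Proof.
move=> H; rewrite cardE -(size_map val) -(size_iota a (b - a)).
apply: uniq_leq_size; first by rewrite map_inj_uniq ?enum_uniq //; apply: val_inj.
move=> x /mapP [i]; rewrite mem_enum => /H /andP[h1 h2] -> ; rewrite mem_iota; apply/andP; split; [exact: h1 | rewrite subnKC //; exact: leq_trans h1 (ltnW h2)].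
Qed.

Section Cuts.
Variables (V : finType) (E : rel V) (s t : V).

Definition dcut (A : {set V}) : {set V * V} :=
  [set e in edgeset E | (e.1 \in A) && (e.2 \notin A)].

Lemma in_dcut (A : {set V}) u v : ((u, v) \in dcut A) = [&& E u v, u \in A & v \notin A].
Proof. by rewrite !inE. Qed.

Lemma has_cut (A : {set V}) x p : x \in A -> path E x p -> last x p \notin A ->
  has (mem (dcut A)) (pairmap (fun a b => (a, b)) x p).
Proof.
elim: p x => [|y q IH] x /=; first by move=> ->.
move=> xA /andP[exy pq] hl.
case yA: (y \in A).
  by rewrite IH ?orbT.
by rewrite in_dcut exy xA yA.
Qed.

Lemma find_le (A B : {set V}) x p : A \subset B -> x \in A -> path E x p ->
  find (mem (dcut A)) (pairmap (fun a b => (a, b)) x p) <=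
  find (mem (dcut B)) (pairmap (fun a b => (a, b)) x p).
Proof.
move=> AB; elim: p x => [|y q IH] x //= xA /andP[exy pq].
rewrite !in_dcut exy xA /=.
case yA: (y \in A) => //=.
rewrite (subsetP AB y yA) andbF /=.
exact: IH.
Qed.

Lemma dcut_cut (A : {set V}) : s \in A -> t \notin A -> is_cut E s t (dcut A).
Proof.
move=> sA tA; split.
  by apply/subsetP => e; rewrite inE => /andP[].
move=> p /and3P[hp hl _]; apply: has_cut => //; by rewrite (eqP hl).
Qed.

Definition reach (X : {set V * V}) : {set V} :=
  [set v | connect (fun a b => E a b && ((a, b) \notin X)) s v].

Lemma all_notin (X : {set V * V}) x p :
  path (fun a b => E a b && ((a, b) \notin X)) x p ->
  all (fun e => e \notin X) (pairmap (fun a b => (a, b)) x p).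
Proof.
elim: p x => [|y q IH] x //= /andP[/andP[_ h] pq]; by rewrite h IH.
Qed.

Lemma min_cut_reach X : is_min_cut E s t X ->
  [/\ s \in reach X, t \notin reach X & X = dcut (reach X)].
Proof.
move=> [[Xsub Xcut] Xmin].
have sA : s \in reach X by rewrite inE connect0.
have tA : t \notin reach X.
  rewrite inE; apply/negP => /connectP [p hp hlast].
  move: hlast; case: (shortenP hp) => p' hp' hu _ hlast.
  have st : st_path E s t p'.
    rewrite /st_path hu -hlast eqxx andbT.
    by rewrite andbT; apply: (sub_path _ hp') => a b /andP[].
  have := Xcut p' st; have := all_notin hp'.
  rewrite /pedges => /allP hall /hasP [e he eX].
  by have := hall e he; rewrite /= (_ : e \in X = true).
split => //.
have sub : dcut (reach X) \subset X.
  apply/subsetP => [[u v]]; rewrite in_dcut => /and3P[euv uA vA].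
  apply/negPn/negP => uvX; move: vA; rewrite !inE => /negP; apply.
  move: uA; rewrite inE => uA; apply: (connect_trans uA).
  by apply: connect1; rewrite /= euv uvX.
apply/esym/eqP; rewrite eqEcard sub /=.
by apply: Xmin; apply: dcut_cut.
Qed.

End Cuts.

Definition mult (V : finType) k (F : 'I_k -> {set V * V}) e := #|[set i | e \in F i]|.

Lemma sum_mult (V : finType) k (F : 'I_k -> {set V * V}) :
  \sum_e mult F e = \sum_i #|F i|.
Proof.
rewrite /mult; under eq_bigr => e _ do rewrite card_sum_nat.
rewrite exchange_big; apply: eq_bigr => i _; rewrite card_sum_nat.
by apply: eq_bigr => e _; rewrite inE.
Qed.

Lemma pair_sum k (f : 'I_k -> 'I_k -> nat) :
  (forall i j, f i j = f j i) -> (forall i, f i i = 0) ->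
  2 * (\sum_(i < k) \sum_(j < k | i < j) f i j) = \sum_(i < k) \sum_(j < k) f i j.
Proof.
move=> hsym hdiag.
have -> : \sum_(i < k) \sum_(j < k) f i j =
   \sum_(i < k) \sum_(j < k | i < j) f i j + \sum_(i < k) \sum_(j < k | j < i) f i j.
  rewrite -big_split; apply: eq_bigr => i _; rewrite (bigID (fun j : 'I_k => i < j)) /=.
  congr (_ + _); rewrite [LHS]big_mkcond [RHS]big_mkcond; apply: eq_bigr => j _.
  case: (ltngtP (nat_of_ord i) (nat_of_ord j)) => h //.
  by rewrite (ord_inj h) hdiag.
have -> : \sum_(i < k) \sum_(j < k | j < i) f i j = \sum_(i < k) \sum_(j < k | i < j) f i j.
  transitivity (\sum_(i < k) \sum_(j < k) (if j < i then f i j else 0)).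
    by apply: eq_bigr => i _; rewrite [LHS]big_mkcond.
  rewrite [LHS]exchange_big. apply: eq_bigr => j _; rewrite [RHS]big_mkcond.
  by apply: eq_bigr => i _; rewrite hsym.
by rewrite mul2n addnn.
Qed.

Lemma count_pairs k (b : 'I_k -> bool) :
  \sum_i \sum_j ((b i != b j) : nat) =
  2 * (#|[set i | b i]| * (k - #|[set i | b i]|)).
Proof.
set m := #|[set i | b i]|.
have hm : #|[set i | b i]| + #|~: [set i | b i]| = k by rewrite cardsC card_ord.
have inner i : \sum_j ((b i != b j) : nat) = if b i then k - m else m.
  rewrite (_ : \sum_j ((b i != b j) : nat) = #|[set j | b i != b j]|); last first.
    by rewrite card_sum_nat; apply: eq_bigr => j _; rewrite inE.
  case hb: (b i).
    rewrite (_ : [set j | true != b j] = ~: [set j | b j]); last first.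
      by apply/setP => j; rewrite !inE; case: (b j).
    rewrite /m; lia.
  rewrite (_ : [set j | false != b j] = [set j | b j]) //.
  by apply/setP => j; rewrite !inE; case: (b j).
under eq_bigr => i _ do rewrite inner.
rewrite (bigID (fun i => b i)) /=.
rewrite (eq_bigr (fun _ => k - m)); last by move=> i ->.
rewrite (eq_bigr (fun _ => m) (P := fun i => ~~ b i)); last by move=> i /negbTE ->.
rewrite !sum_nat_const.
have e1 : #|(fun i => b i)| = m by rewrite /m; apply: eq_card => i; rewrite inE.
have e2 : #|(fun i => ~~ b i)| = #|~: [set i | b i]| by apply: eq_card => i; rewrite !inE.
rewrite e1 e2.
have -> : #|~: [set i | b i]| = k - m by rewrite /m; lia.
lia.
Qed.

Lemma dsum_mult (V : finType) k (F : 'I_k -> {set V * V}) :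
  2 * dsum F = \sum_e 2 * (mult F e * (k - mult F e)).
Proof.
rewrite /dsum.
have -> : \sum_(i < k) \sum_(j < k | i < j) #|symdiff (F i) (F j)| =
   \sum_e \sum_(i < k) \sum_(j < k | i < j) (((e \in F i) != (e \in F j)) : nat).
  transitivity (\sum_(i < k) \sum_(j < k | i < j) \sum_e
      (((e \in F i) != (e \in F j)) : nat)).
    apply: eq_bigr => i _; apply: eq_bigr => j _; rewrite card_sum_nat.
    apply: eq_bigr => e _; rewrite /symdiff !inE.
    by case: (e \in F i); case: (e \in F j).
  transitivity (\sum_(i < k) \sum_e \sum_(j < k | i < j)
      (((e \in F i) != (e \in F j)) : nat)).
    by apply: eq_bigr => i _; rewrite [LHS]exchange_big.
  by rewrite [LHS]exchange_big.
rewrite big_distrr; apply: eq_bigr => e _ /=.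
rewrite pair_sum; last by move=> i; rewrite eqxx.
  by rewrite (count_pairs (fun i => e \in F i)).
by move=> i j; rewrite eq_sym.
Qed.

Theorem corollary1 (V : finType) (E : rel V) (s t : V) (k : nat) :
  1 <= k ->
  forall C : 'I_k -> {set V * V},
    inU E s t C ->
    (forall S : 'I_k -> {set V * V}, inU E s t S -> dsum S <= dsum C) ->
    exists C' : 'I_k -> {set V * V}, inUlr E s t C' /\ dsum C' = dsum C.
Proof.
move=> _ C hC _.
pose A j := reach E s (C j).
have hA j : [/\ s \in A j, t \notin A j & C j = dcut E (A j)]
  := min_cut_reach (hC j).
pose cnt v := #|[set j | v \in A j]|.
pose B (i : 'I_k) := [set v | k - i <= cnt v].
pose C' i := dcut E (B i).
have cs : cnt s = k.
  rewrite /cnt (_ : [set j | s \in A j] = setT) ?cardsT ?card_ord //.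
  by apply/setP => j; rewrite in_set in_setT; case: (hA j).
have ct : cnt t = 0.
  apply/eqP; rewrite cards_eq0; apply/eqP/setP => j; rewrite in_set in_set0.
  by case: (hA j) => _ /negbTE -> _.
have sB i : s \in B i by rewrite inE cs leq_subr.
have tB i : t \notin B i by rewrite inE ct -ltnNge subn_gt0 ltn_ord.
have cutB i : is_cut E s t (C' i) := dcut_cut E (sB i) (tB i).
have cle v : cnt v <= k by apply: leq_trans (max_card _) _; rewrite card_ord.
have hle e : mult C' e <= mult C e.
  case: e => u v.
  case euv: (E u v); last first.
    rewrite /mult (_ : [set i | (u, v) \in C' i] = set0) ?cards0 //.
    by apply/setP => i; rewrite inE /C' in_dcut euv in_set0.
  have L1 : mult C' (u, v) <= (k - cnt v) - (k - cnt u).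
    apply: card_interval => x; rewrite inE /C' in_dcut euv !inE /=.
    move=> /andP[h1 h2]; have := ltn_ord x => h3.
    apply/andP; split; lia.
  have L2 : cnt u - cnt v <= mult C (u, v).
    apply: (@leq_trans #|[set j | u \in A j] :\: [set j | v \in A j]|).
      by rewrite cardsD; apply: leq_sub2l; apply: subset_leq_card; apply: subsetIr.
    apply: subset_leq_card; apply/subsetP => j; rewrite in_setD !in_set => /andP[hv hu].
    by case: (hA j) => _ _ ->; rewrite in_dcut euv /= !in_set hu (negbTE hv).
  have := cle u; have := cle v; lia.
have hsum : \sum_e mult C e <= \sum_e mult C' e.
  rewrite !sum_mult; apply: leq_sum => i _.
  by case: (hC i) => _ hmin; apply: hmin.
have heq e : mult C' e = mult C e := pos_eq_sum hle hsum e.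
have hcard i : #|C i| = #|C' i|.
  apply: (@pos_eq_sum _ (fun i => #|C i|) (fun i => #|C' i|)).
    by move=> j; case: (hC j) => _ hmin; apply: hmin.
  by rewrite -!sum_mult; apply: leq_sum => e _; rewrite heq.
exists C'; split; [split|].
- move=> i; split; first exact: cutB.
  by move=> Y hY; rewrite -hcard; case: (hC i) => _ h; exact: h.
- move=> i j hij p hp; rewrite /pedges; apply: find_le.
  + apply/subsetP => v; rewrite !inE => h; apply: leq_trans h.
    by apply: leq_sub2l; apply: ltnW.
  + exact: sB.
  + by case/and3P: hp.
- apply/eqP; rewrite -(eqn_pmul2l (_ : 0 < 2)) // !dsum_mult; apply/eqP.
  by apply: eq_bigr => e _; rewrite heq.
Qed.
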